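(* Let $L\ge1$ and let $\pi_L:\mathfrak{OA}\to\mathfrak{OA}_{1,L}=\mathfrak{OA}/\mathfrak I_{(t-1)^L}$ be the projection. There are unique elements $\underline X_k,\underline Y_k\in\mathfrak{OA}_{1,L}$ ($0\le k<L$) such that for all $m\in\mathbb Z$ $$\pi_L(A_m)=\sum_{k=0}^{L-1}\binom mk\underline X_k,\qquad \pi_L(G_m)=\sum_{k=0}^{L-1}(-1)^k\binom mk\underline Y_k .$$ Moreover $\underline Y_k=\frac{(-1)^k}{4}[\underline X_k,\underline X_0]$ for $0\le k<L$.
   Context: Work over $\mathbb C$. $\mathfrak{sl}_2$ has basis $e,f,h$ with $[e,f]=h$, $[h,e]=2e$, $[h,f]=-2f$. $L(\mathfrak{sl}_2)=\mathbb C[t,t^{-1}]\otimes\mathfrak{sl}_2$ is the loop algebra with bracket $[p(t)x,q(t)y]=p(t)q(t)[x,y]$. The Onsager algebra is the Lie subalgebra $\mathfrak{OA}=\{p(t)e+p(t^{-1})f+q(t)h:\ p,q\in\mathbb C[t,t^{-1}],\ q(t^{-1})=-q(t)\}$ of $L(\mathfrak{sl}_2)$, spanned by $A_m=2t^me+2t^{-m}f$ and $G_m=(t^m-t^{-m})h$, $m\in\mathbb Z$. $\mathfrak I_{(t-1)^L}=\{p(t)e+p(t^{-1})f+q(t)h\in\mathfrak{OA}: p,q\in(t-1)^L\mathbb C[t,t^{-1}]\}$. For $m\in\mathbb Z$, $k\ge0$: $\binom mk=m(m-1)\cdots(m-k+1)/k!$, $\binom m0=1$. *)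

(* Defs.v *)
From mathcomp Require Import all_boot all_order all_algebra.
From mathcomp Require Import reals Rstruct.
From mathcomp.real_closed Require Import complex.
Set Implicit Arguments. Unset Strict Implicit. Unset Printing Implicit Defensive.
Import Order.TTheory GRing.Theory Num.Theory.
Local Open Scope ring_scope.

Definition C : fieldType := (Rdefinitions.R)[i].

(* ---------- Laurent polynomials C[t,t^-1] ----------
   A pair (a, n) with a : {poly C}, n : nat represents a(t) * t^(-n).
   Equality of Laurent polynomials is the relation [leqv] below. *)
Definition laurent := ({poly C} * nat)%type.

Definition leqv (x y : laurent) : Prop := x.1 * 'X^(y.2) = y.1 * 'X^(x.2).
Definition lzero : laurent := (0, 0%N).
Definition ladd (x y : laurent) : laurent :=
  (x.1 * 'X^(y.2) + y.1 * 'X^(x.2), (x.2 + y.2)%N).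
Definition lopp (x : laurent) : laurent := (- x.1, x.2).
Definition lmul (x y : laurent) : laurent := (x.1 * y.1, (x.2 + y.2)%N).
Definition lscale (c : C) (x : laurent) : laurent := (c *: x.1, x.2).
Definition lmon (k : int) : laurent :=
  match k with Posz n => ('X^n, 0%N) | Negz n => (1, n.+1) end.
(* p(t) |-> p(t^-1):  a(t) t^-n |-> sum_i a_i t^(n-i) *)
Definition linv (x : laurent) : laurent :=
  (\sum_(i < size x.1) x.1`_i *: 'X^(size x.1 - i + x.2), size x.1).
Definition in_tm1_ideal (L : nat) (x : laurent) : Prop :=
  exists r : laurent, leqv x (lmul (('X - 1) ^+ L, 0%N) r).

(* ---------- the loop algebra L(sl2) = C[t,t^-1] (x) sl2 ----------
   An element is  le * e + lf * f + lh * h. *)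
Record loop := Loop { le : laurent; lf : laurent; lh : laurent }.

Definition loop0 : loop := Loop lzero lzero lzero.
Definition loop_add (x y : loop) : loop :=
  Loop (ladd (le x) (le y)) (ladd (lf x) (lf y)) (ladd (lh x) (lh y)).
Definition loop_opp (x : loop) : loop := Loop (lopp (le x)) (lopp (lf x)) (lopp (lh x)).
Definition loop_scale (c : C) (x : loop) : loop :=
  Loop (lscale c (le x)) (lscale c (lf x)) (lscale c (lh x)).
(* Lie bracket [p x, q y] = p q [x,y] with [e,f]=h, [h,e]=2e, [h,f]=-2f:
   [x,y] = 2(x_h y_e - x_e y_h) e + 2(x_f y_h - x_h y_f) f + (x_e y_f - x_f y_e) h *)
Definition loop_bracket (x y : loop) : loop :=
  Loop (lscale 2 (ladd (lmul (lh x) (le y)) (lopp (lmul (le x) (lh y)))))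
       (lscale 2 (ladd (lmul (lf x) (lh y)) (lopp (lmul (lh x) (lf y)))))
       (ladd (lmul (le x) (lf y)) (lopp (lmul (lf x) (le y)))).
Definition loop_sum (n : nat) (F : nat -> loop) : loop :=
  foldr loop_add loop0 (map F (iota 0 n)).

(* x = p(t) e + p(t^-1) f + q(t) h  with q(t^-1) = -q(t) *)
Definition inOA (x : loop) : Prop :=
  leqv (lf x) (linv (le x)) /\ leqv (linv (lh x)) (lopp (lh x)).
Definition inI (L : nat) (x : loop) : Prop :=
  inOA x /\ in_tm1_ideal L (le x) /\ in_tm1_ideal L (lh x).
(* x and y have the same image in OA_{1,L} = OA / I_{(t-1)^L} *)
Definition congI (L : nat) (x y : loop) : Prop := inI L (loop_add x (loop_opp y)).

Definition A_ (m : int) : loop :=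
  Loop (lscale 2 (lmon m)) (lscale 2 (lmon (- m))) lzero.
Definition G_ (m : int) : loop :=
  Loop lzero lzero (ladd (lmon m) (lopp (lmon (- m)))).

Definition binomZ (m : int) (k : nat) : C :=
  (\prod_(i < k) (m - i%:Z)%:~R) / (k`!)%:R.

(* X, Y : families of representatives (in OA) of elements of OA_{1,L}
   satisfying pi_L(A_m) = sum_k binom(m,k) X_k and
   pi_L(G_m) = sum_k (-1)^k binom(m,k) Y_k for all m. *)
Definition expansion (L : nat) (X Y : nat -> loop) : Prop :=
  (forall k, (k < L)%N -> inOA (X k) /\ inOA (Y k)) /\
  (forall m : int,
     congI L (A_ m) (loop_sum L (fun k => loop_scale (binomZ m k) (X k))) /\
     congI L (G_ m) (loop_sum L (fun k => loop_scale ((-1) ^+ k * binomZ m k) (Y k)))).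

(* Main.v *)
Require Import Defs.
From mathcomp Require Import all_boot all_order all_algebra fraction.
From mathcomp Require Import ring.
From mathcomp Require Import reals Rstruct.
From mathcomp.real_closed Require Import complex.
Set Implicit Arguments. Unset Strict Implicit. Unset Printing Implicit Defensive.
Local Open Scope ring_scope.
Import GRing.Theory.

Definition K := {fraction {poly C}}.
Definition tf : {rmorphism {poly C} -> K} := @FracField.tofrac _.
Definition io : {rmorphism C -> K} := tf \o polyC.
Lemma cfu (z : K) : commr_rmorph io z. Proof. by move=> a; rewrite /GRing.comm mulrC. Qed.
Definition ev (z : K) : {rmorphism {poly C} -> K} := horner_morph (cfu z).
Definition Xf : K := tf 'X.

Lemma tf_ev p : tf p = ev Xf p.
Proof. exact: (poly_initial tf p). Qed.
Lemma ev_sum z p : ev z p = \sum_(i < size p) io p`_i * z ^+ i.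
Proof. by rewrite /= /horner_morph horner_coef size_map_inj_poly ?rmorph0 //; [apply: eq_bigr => i _; rewrite coef_map | exact: fmorph_inj]. Qed.
Lemma ev_X z : ev z 'X = z. Proof. exact: horner_morphX. Qed.
Lemma ev_C z c : ev z c%:P = io c. Proof. exact: horner_morphC. Qed.

Lemma tf_inj p q : tf p = tf q -> p = q.
Proof. by move=> h; apply/eqP; rewrite -tofrac_eq; apply/eqP. Qed.
Lemma Xf_neq0 : Xf != 0.
Proof. by rewrite /Xf /= tofrac_eq0 polyX_eq0. Qed.
Lemma XfV_neq0 : Xf^-1 != 0.
Proof. by rewrite invr_eq0 Xf_neq0. Qed.
Lemma Xfn_neq0 n : Xf ^+ n != 0.
Proof. by rewrite expf_neq0 // Xf_neq0. Qed.

Definition phi (x : laurent) : K := tf x.1 / Xf ^+ x.2.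
Definition sig (x : laurent) : K := Xf ^+ x.2 * ev Xf^-1 x.1.

Lemma eq_div_cross (F : fieldType) (a b c d : F) : c != 0 -> d != 0 ->
  (a / c = b / d) <-> (a * d = b * c).
Proof. move=> hc hd; split=> h; apply/eqP; [rewrite -eqr_div // | rewrite eqr_div //]; exact/eqP. Qed.

Lemma leqv_phi x y : leqv x y <-> phi x = phi y.
Proof.
rewrite /leqv /phi eq_div_cross ?Xfn_neq0 //; split.
  by move=> h; rewrite -!rmorphXn -!rmorphM h.
by move=> h; apply: tf_inj; rewrite !rmorphM !rmorphXn.
Qed.

Lemma fracD (F : fieldType) (a b c d : F) : c != 0 -> d != 0 -> (a*d + b*c)/(c*d) = a/c + b/d.
Proof. move=> hc hd. field. by rewrite hc hd. Qed.

Lemma phi_add x y : phi (ladd x y) = phi x + phi y.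
Proof. by rewrite /phi /= rmorphD !rmorphM !rmorphXn exprD fracD ?Xfn_neq0. Qed.
Lemma phi_opp x : phi (lopp x) = - phi x.
Proof. by rewrite /phi /= rmorphN mulNr. Qed.
Lemma phi_mul x y : phi (lmul x y) = phi x * phi y.
Proof. by rewrite /phi /= rmorphM exprD invfM mulrACA. Qed.
Lemma phi_scale c x : phi (lscale c x) = io c * phi x.
Proof. by rewrite /phi /= -mul_polyC rmorphM mulrA. Qed.
Lemma phi_zero : phi lzero = 0.
Proof. by rewrite /phi /= rmorph0 mul0r. Qed.
Lemma phi_mon m : phi (lmon m) = Xf ^ m.
Proof.
case: m => n; rewrite /phi /=.
  by rewrite expr0 invr1 mulr1 rmorphXn.
by rewrite rmorph1 mul1r.
Qed.

Lemma sig_add x y : sig (ladd x y) = sig x + sig y.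
Proof.
rewrite /sig /= rmorphD !rmorphM !rmorphXn exprD.
have h (F : fieldType) (X A B : F) (m n : nat) : X != 0 ->
  X ^+ n * X ^+ m * (A * X^-1 ^+ m + B * X^-1 ^+ n) = X ^+ n * A + X ^+ m * B.
  move=> hX; rewrite !exprVn; field; by rewrite !expf_neq0.
by rewrite !ev_X h ?Xf_neq0.
Qed.
Lemma sig_opp x : sig (lopp x) = - sig x.
Proof. by rewrite /sig /= rmorphN mulrN. Qed.
Lemma sig_mul x y : sig (lmul x y) = sig x * sig y.
Proof. by rewrite /sig /= rmorphM exprD mulrACA. Qed.
Lemma sig_scale c x : sig (lscale c x) = io c * sig x.
Proof. by rewrite /sig /= -mul_polyC rmorphM ev_C mulrCA. Qed.
Lemma sig_zero : sig lzero = 0.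
Proof. by rewrite /sig /= rmorph0 mulr0. Qed.
Lemma sig_mon m : sig (lmon m) = Xf ^ (- m).
Proof.
case: m => n; rewrite /sig /=.
  by rewrite expr0 mul1r rmorphXn ev_X -exprz_inv.
by rewrite rmorph1 mulr1 NegzE opprK.
Qed.

Lemma tf_scaleX c k : tf (c *: 'X^k) = io c * Xf ^+ k.
Proof. by rewrite -mul_polyC rmorphM rmorphXn. Qed.
Lemma ev_scaleX z c k : ev z (c *: 'X^k) = io c * z ^+ k.
Proof. by rewrite -mul_polyC rmorphM rmorphXn ev_C ev_X. Qed.

Lemma aux_L4 (F : fieldType) (X c : F) (s n i : nat) : X != 0 -> (i <= s)%N ->
  c * X ^+ (s - i + n) / X ^+ s = X ^+ n * (c * X^-1 ^+ i).
Proof.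
move=> hX hi; move: (s - i)%N (subnK hi) => k <-.
rewrite !exprD exprVn; field; by rewrite !expf_neq0.
Qed.

Lemma phi_linv x : phi (linv x) = sig x.
Proof.
rewrite /phi /sig /linv /= rmorph_sum mulr_suml ev_sum mulr_sumr.
apply: eq_bigr => i _; rewrite tf_scaleX.
have hi : (i <= size x.1)%N by exact: ltnW.
by rewrite aux_L4 ?Xf_neq0.
Qed.

Lemma aux_L5 (F : fieldType) (X c : F) (s n i : nat) : X != 0 -> (i <= s)%N ->
  X ^+ s * (c * X^-1 ^+ (s - i + n)) = c * X ^+ i / X ^+ n.
Proof.
move=> hX hi; move: (s - i)%N (subnK hi) => k <-.
rewrite !exprD !exprVn; field; by rewrite !expf_neq0.
Qed.

Lemma sig_linv x : sig (linv x) = phi x.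
Proof.
rewrite /phi /sig /linv /= rmorph_sum mulr_sumr tf_ev ev_sum mulr_suml.
apply: eq_bigr => i _; rewrite ev_scaleX.
have hi : (i <= size x.1)%N by exact: ltnW.
by rewrite aux_L5 ?Xf_neq0.
Qed.

Lemma aux_sig (F : fieldType) (X A B : F) (a b : nat) : X != 0 ->
  A * X^-1 ^+ b = B * X^-1 ^+ a -> X ^+ a * A = X ^+ b * B.
Proof.
move=> hX h.
have eA : A = A * X^-1 ^+ b * X ^+ b by rewrite exprVn mulfVK // expf_neq0.
rewrite eA h exprVn; field; by rewrite !expf_neq0.
Qed.

Lemma sig_leqv x y : leqv x y -> sig x = sig y.
Proof.
rewrite /leqv /sig => h.
have := congr1 (ev Xf^-1) h; rewrite !rmorphM !rmorphXn !ev_X.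
exact: aux_sig Xf_neq0.
Qed.

Definition Rl (u : K) := exists z, u = phi z.
Lemma Rl_phi z : Rl (phi z). Proof. by exists z. Qed.
Lemma Rl_sig z : Rl (sig z). Proof. by exists (linv z); rewrite phi_linv. Qed.
Lemma Rl_add u v : Rl u -> Rl v -> Rl (u + v).
Proof. by move=> [a ->] [b ->]; exists (ladd a b); rewrite phi_add. Qed.
Lemma Rl_opp u : Rl u -> Rl (- u).
Proof. by move=> [a ->]; exists (lopp a); rewrite phi_opp. Qed.
Lemma Rl_mul u v : Rl u -> Rl v -> Rl (u * v).
Proof. by move=> [a ->] [b ->]; exists (lmul a b); rewrite phi_mul. Qed.
Lemma Rl_io c : Rl (io c).
Proof. by exists (c%:P, 0%N); rewrite /phi /= expr0 invr1 mulr1. Qed.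
Lemma Rl0 : Rl 0. Proof. by exists lzero; rewrite phi_zero. Qed.
Lemma Rl1 : Rl 1. Proof. by have := Rl_io 1; rewrite rmorph1. Qed.
Lemma Rl_Xf : Rl Xf. Proof. by exists (lmon 1); rewrite phi_mon. Qed.
Lemma Rl_XfV : Rl Xf^-1. Proof. by exists (lmon (-1)); rewrite phi_mon exprN1. Qed.
Lemma Rl_exp u n : Rl u -> Rl (u ^+ n).
Proof. move=> h; elim: n => [|n IH]; first by rewrite expr0; exact: Rl1. by rewrite exprS; apply: Rl_mul. Qed.

Section Ideal.
Variable L : nat.
Definition T : K := (Xf - 1) ^+ L.
Definition J (u : K) := exists v, Rl v /\ u = T * v.
Definition PL : laurent := (('X - 1) ^+ L, 0%N).
Lemma phi_PL : phi PL = T.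
Proof. by rewrite /phi /T /= expr0 invr1 mulr1 rmorphXn rmorphB rmorph1. Qed.
Lemma sig_PL : sig PL = (Xf^-1 - 1) ^+ L.
Proof. by rewrite /sig /= expr0 mul1r rmorphXn rmorphB rmorph1 ev_X. Qed.

Lemma J_phi x : in_tm1_ideal L x <-> J (phi x).
Proof.
split.
  move=> [r /leqv_phi h]; exists (phi r); split; first exact: Rl_phi.
  by rewrite h phi_mul phi_PL.
move=> [v [[r ->] h]]; exists r; apply/leqv_phi; by rewrite phi_mul phi_PL.
Qed.
Lemma J0 : J 0. Proof. by exists 0; split; [exact: Rl0 | rewrite mulr0]. Qed.
Lemma J_add u v : J u -> J v -> J (u + v).
Proof. by move=> [a [ha ->]] [b [hb ->]]; exists (a + b); split; [exact: Rl_add | rewrite mulrDr]. Qed.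
Lemma J_opp u : J u -> J (- u).
Proof. by move=> [a [ha ->]]; exists (- a); split; [exact: Rl_opp | rewrite mulrN]. Qed.
Lemma J_sub u v : J u -> J v -> J (u - v).
Proof. by move=> hu hv; apply: J_add => //; apply: J_opp. Qed.
Lemma J_mulr u v : J u -> Rl v -> J (u * v).
Proof. by move=> [a [ha ->]] hv; exists (a * v); split; [exact: Rl_mul | rewrite mulrA]. Qed.
Lemma J_mull u v : Rl v -> J u -> J (v * u).
Proof. by move=> hv hu; rewrite mulrC; apply: J_mulr. Qed.
Lemma J_sum (I : Type) (r : seq I) (P : pred I) (F : I -> K) :
  (forall i, P i -> J (F i)) -> J (\sum_(i <- r | P i) F i).
Proof. move=> h; apply: (big_ind J) => //; [exact: J0 | exact: J_add]. Qed.
Lemma J_T : J T. Proof. by exists 1; split; [exact: Rl1 | rewrite mulr1]. Qed.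

Lemma aux_inv (F : fieldType) (X : F) : X != 0 ->
  (X^-1 - 1) ^+ L = (X - 1) ^+ L * ((-1) ^+ L / X ^+ L).
Proof.
move=> hX; have -> : X^-1 - 1 = (X - 1) * (-1 / X) by field.
rewrite exprMn; congr (_ * _); rewrite expr_div_n //.
Qed.

Lemma J_TV : J ((Xf^-1 - 1) ^+ L).
Proof.
rewrite aux_inv ?Xf_neq0 // -exprVn; apply: J_mulr; first exact: J_T.
apply: Rl_mul; last by apply: Rl_exp; exact: Rl_XfV.
by apply: Rl_exp; apply: Rl_opp; exact: Rl1.
Qed.

Lemma J_sig x : J (phi x) -> J (sig x).
Proof.
move=> /J_phi [r /sig_leqv ->]; rewrite sig_mul sig_PL.
by apply: J_mulr; [exact: J_TV | exact: Rl_sig].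
Qed.
End Ideal.

Lemma natC_neq0 n : (n.+1%:R : C) != 0.
Proof. have -> : (n.+1%:R : C) = (n.+1%:R : (Rdefinitions.R)[i]) by []. by rewrite Num.Theory.pnatr_eq0. Qed.
Lemma fact_neq0 n : ((n`!)%:R : C) != 0.
Proof. have := fact_gt0 n; case: (n`!) => // k _; exact: natC_neq0. Qed.

Definition Pb (m : int) (k : nat) : C := \prod_(i < k) (m - i%:Z)%:~R.
Lemma binomZE m k : binomZ m k = Pb m k / (k`!)%:R. Proof. by []. Qed.

Lemma PbS m k : Pb (m + 1) k.+1 = (m + 1)%:~R * Pb m k.
Proof.
rewrite /Pb big_ord_recl /= subr0; congr (_ * _); apply: eq_bigr => i _.
by rewrite /bump /= add1n intS; congr (_%:~R); ring.
Qed.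
Lemma PbSr m k : Pb m k.+1 = Pb m k * (m - k%:Z)%:~R.
Proof. by rewrite /Pb big_ord_recr. Qed.

Lemma binomZ0 m : binomZ m 0 = 1.
Proof. by rewrite /binomZ big_ord0 fact0 divr1. Qed.
Lemma binomZ0S k : binomZ 0 k.+1 = 0.
Proof. by rewrite /binomZ big_ord_recl /= subr0 mul0r mul0r. Qed.

Lemma aux_pascal (F : fieldType) (P M1 Mk K1 f : F) : f != 0 -> K1 != 0 ->
  M1 = Mk + K1 -> M1 * P / (K1 * f) = P * Mk / (K1 * f) + P / f.
Proof. move=> hf hK ->; field; by rewrite hf hK. Qed.

Lemma pascal m k : binomZ (m + 1) k.+1 = binomZ m k.+1 + binomZ m k.
Proof.
rewrite !binomZE PbS PbSr factS natrM; apply: aux_pascal; rewrite ?fact_neq0 ?natC_neq0 //.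
by rewrite pmulrn -rmorphD; congr (_%:~R); rewrite intS; ring.
Qed.

Lemma Pb_diag (k : nat) : Pb k k = (k`!)%:R.
Proof.
elim: k => [|k IH]; first by rewrite /Pb big_ord0 fact0.
have -> : (k.+1 : int) = k%:Z + 1 by rewrite intS addrC.
by rewrite PbS IH factS natrM mulrC addrC -intS mulrC.
Qed.
Lemma binomZ_diag (k : nat) : binomZ k k = 1.
Proof. by rewrite binomZE Pb_diag divff ?fact_neq0. Qed.
Lemma binomZ_gt (k j : nat) : (k < j)%N -> binomZ k j = 0.
Proof.
move=> hkj; rewrite binomZE; apply/eqP; rewrite mulf_eq0; apply/orP; left.
apply/prodf_eq0; exists (Ordinal hkj) => //=; by rewrite subrr.
Qed.

Section Dsec.
Variable L' : nat.
Local Notation L := L'.+1.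

Definition Sm (u : K) (m : int) := \sum_(k < L) io (binomZ m k) * (u - 1) ^+ k.
Definition Dm (u : K) (m : int) := u ^ m - Sm u m.

Lemma Dm_rec u m : u != 0 ->
  Dm u (m + 1) = u * Dm u m + io (binomZ m L') * (u - 1) ^+ L.
Proof.
move=> hu.
set A := \sum_(k < L') io (binomZ m k.+1) * (u - 1) ^+ k.+1.
set B := \sum_(k < L') io (binomZ m k) * (u - 1) ^+ k.+1.
have eS1 : Sm u (m + 1) = 1 + (A + B).
  rewrite /Sm big_ord_recl binomZ0 rmorph1 expr0 mulr1 -big_split.
  congr (_ + _); apply: eq_bigr => i _; by rewrite ?lift0 pascal (rmorphD io) mulrDl.
have eS0 : Sm u m = 1 + A.
  rewrite /Sm big_ord_recl binomZ0 rmorph1 expr0 mulr1.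
  congr (_ + _); apply: eq_bigr => i _; by rewrite ?lift0.
have eW : (u - 1) * Sm u m = B + io (binomZ m L') * (u - 1) ^+ L.
  rewrite /Sm mulr_sumr big_ord_recr /=; congr (_ + _).
    by apply: eq_bigr => i _; rewrite mulrCA exprS.
  by rewrite mulrCA exprS.
have eB : B = (u - 1) * (1 + A) - io (binomZ m L') * (u - 1) ^+ L.
  by rewrite -eS0 eW addrK.
rewrite /Dm eS1 eS0 eB exprzDr ?unitfE // expr1z.
ring.
Qed.

Lemma Dm0 u : Dm u 0 = 0.
Proof.
rewrite /Dm /Sm big_ord_recl binomZ0 rmorph1 expr0 mulr1 expr0z big1 ?addr0 ?subrr //.
by move=> i _; rewrite lift0 binomZ0S rmorph0 mul0r.
Qed.

Lemma D_J u : u != 0 -> Rl u -> Rl u^-1 -> J L ((u - 1) ^+ L) ->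
  forall m, J L (Dm u m).
Proof.
move=> hu hRu hRV hJ.
have rec m : J L (Dm u m) <-> J L (Dm u (m + 1)).
  rewrite Dm_rec //; split=> h.
    by apply: J_add; [apply: J_mull | apply: J_mull => //; exact: Rl_io].
  have -> : Dm u m = u^-1 * ((u * Dm u m + io (binomZ m L') * (u - 1) ^+ L)
                                - io (binomZ m L') * (u - 1) ^+ L).
    by rewrite addrK mulKf.
  apply: J_mull => //; apply: J_sub => //; apply: J_mull => //; exact: Rl_io.
have hpos (n : nat) : J L (Dm u n).
  elim: n => [|n IH]; first by rewrite Dm0; exact: J0.
  have -> : (n.+1 : int) = n%:Z + 1 by rewrite intS addrC.
  exact: (proj1 (rec n) IH).
have hneg (n : nat) : J L (Dm u (- n%:Z)).
  elim: n => [|n IH]; first by rewrite oppr0 Dm0; exact: J0.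
  apply: (proj2 (rec (- (n.+1 : int)))).
  have -> : - (n.+1 : int) + 1 = - (n : int) by rewrite intS; ring.
  exact: IH.
by case=> n; [exact: hpos | rewrite NegzE; exact: hneg].
Qed.

Lemma tri (d : nat -> K) :
  (forall m : nat, (m < L)%N -> J L (\sum_(k < L) io (binomZ m k) * d k)) ->
  forall k, (k < L)%N -> J L (d k).
Proof.
move=> h k; elim: k {-2}k (leqnn k) => [|n IH] k hk hkL.
  all: have := h k hkL; rewrite (bigD1 (Ordinal hkL)) //= binomZ_diag rmorph1 mul1r => hs.
  all: have hrest : J L (\sum_(i < L | i != Ordinal hkL) io (binomZ k i) * d i).
  all: try (apply: J_sum => i hi).
  all: try (have [hik|hik|hik] := ltngtP i k).
  all: try (by rewrite binomZ_gt // rmorph0 mul0r; exact: J0).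
  all: try (by case/eqP: hi; apply: val_inj).
  all: try (by move: hik; rewrite leqn0 in hk; rewrite (eqP hk)).
  all: try (apply: J_mull; [exact: Rl_io | apply: IH; [exact: leq_trans hik hk | exact: ltn_trans hik hkL]]).
  all: by have := J_sub hs hrest; rewrite addrK.
Qed.
End Dsec.

Definition Ee x := phi (le x).
Definition Ef x := phi (lf x).
Definition Eh x := phi (lh x).
Definition Se x := sig (le x).
Definition Sf x := sig (lf x).
Definition Sh x := sig (lh x).

Lemma inOA_sem x : inOA x <-> Ef x = Se x /\ Sh x = - Eh x.
Proof.
rewrite /inOA /Ef /Se /Sh /Eh !leqv_phi phi_linv phi_opp phi_linv.
by [].
Qed.

Lemma Sf_OA x : inOA x -> Sf x = Ee x.
Proof. by case=> h _; rewrite /Sf (sig_leqv h) sig_linv. Qed.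

Lemma inI_sem L x : inI L x <-> inOA x /\ J L (Ee x) /\ J L (Eh x).
Proof. by rewrite /inI !J_phi. Qed.

Lemma congI_J L x y : congI L x y -> J L (Ee x - Ee y) /\ J L (Eh x - Eh y).
Proof.
case/inI_sem => _ [h1 h2]; split.
  by move: h1; rewrite /Ee /= phi_add phi_opp.
by move: h2; rewrite /Eh /= phi_add phi_opp.
Qed.

Lemma congI_sem L x y : inOA x -> inOA y ->
  J L (Ee x - Ee y) -> J L (Eh x - Eh y) -> congI L x y.
Proof.
move=> /inOA_sem [hx1 hx2] /inOA_sem [hy1 hy2] h1 h2; apply/inI_sem; split; last first.
  split; first by move: h1; rewrite /Ee /= phi_add phi_opp.
  by move: h2; rewrite /Eh /= phi_add phi_opp.
apply/inOA_sem; move: hx1 hx2 hy1 hy2; rewrite /Ef /Se /Sh /Eh /= !phi_add !phi_opp !sig_add !sig_opp.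
by move=> -> -> -> ->; split=> //; rewrite opprD.
Qed.

Lemma sum_gen (g : laurent -> K) (pr : loop -> laurent) n F :
  (forall x y, g (pr (loop_add x y)) = g (pr x) + g (pr y)) -> g (pr loop0) = 0 ->
  g (pr (loop_sum n F)) = \sum_(k < n) g (pr (F k)).
Proof.
move=> hadd h0; rewrite /loop_sum -(big_mkord xpredT (fun k => g (pr (F k)))) /index_iota subn0.
elim: (iota 0 n) => [|a s IH] /=; first by rewrite big_nil.
by rewrite hadd IH big_cons.
Qed.

Lemma sum_scale (g : laurent -> K) (pr : loop -> laurent) n c F :
  (forall x y, g (pr (loop_add x y)) = g (pr x) + g (pr y)) -> g (pr loop0) = 0 ->
  (forall c x, g (pr (loop_scale c x)) = io c * g (pr x)) ->
  g (pr (loop_sum n (fun k => loop_scale (c k) (F k)))) = \sum_(k < n) io (c k) * g (pr (F k)).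
Proof. by move=> h1 h2 h3; rewrite sum_gen //; apply: eq_bigr => k _; rewrite h3. Qed.

Lemma Ee_sum n c F : Ee (loop_sum n (fun k => loop_scale (c k) (F k))) = \sum_(k < n) io (c k) * Ee (F k).
Proof. apply: sum_scale => *; [exact: phi_add | exact: phi_zero | exact: phi_scale]. Qed.
Lemma Ef_sum n c F : Ef (loop_sum n (fun k => loop_scale (c k) (F k))) = \sum_(k < n) io (c k) * Ef (F k).
Proof. apply: sum_scale => *; [exact: phi_add | exact: phi_zero | exact: phi_scale]. Qed.
Lemma Eh_sum n c F : Eh (loop_sum n (fun k => loop_scale (c k) (F k))) = \sum_(k < n) io (c k) * Eh (F k).
Proof. apply: sum_scale => *; [exact: phi_add | exact: phi_zero | exact: phi_scale]. Qed.
Lemma Se_sum n c F : Se (loop_sum n (fun k => loop_scale (c k) (F k))) = \sum_(k < n) io (c k) * Se (F k).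
Proof. apply: sum_scale => *; [exact: sig_add | exact: sig_zero | exact: sig_scale]. Qed.
Lemma Sh_sum n c F : Sh (loop_sum n (fun k => loop_scale (c k) (F k))) = \sum_(k < n) io (c k) * Sh (F k).
Proof. apply: sum_scale => *; [exact: sig_add | exact: sig_zero | exact: sig_scale]. Qed.

Lemma inOA_sum n c F : (forall k, (k < n)%N -> inOA (F k)) ->
  inOA (loop_sum n (fun k => loop_scale (c k) (F k))).
Proof.
move=> h; apply/inOA_sem; rewrite Ef_sum Se_sum Sh_sum Eh_sum -sumrN; split;
  apply: eq_bigr => k _; have /inOA_sem [h1 h2] := h k (ltn_ord k).
  by rewrite h1.
by rewrite h2 mulrN.
Qed.

Lemma inOA_scale c x : inOA x -> inOA (loop_scale c x).
Proof.
move/inOA_sem=> [h1 h2]; apply/inOA_sem; move: h1 h2.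
rewrite /Ef /Se /Sh /Eh /= !phi_scale !sig_scale => -> ->; split=> //; by rewrite mulrN.
Qed.

Lemma inOA_bracket x y : inOA x -> inOA y -> inOA (loop_bracket x y).
Proof.
move=> hx hy; have fx := Sf_OA hx; have fy := Sf_OA hy.
move/inOA_sem: hx => [ex hx]; move/inOA_sem: hy => [ey hy].
move: fx fy ex hx ey hy; rewrite /Sf /Ee /Ef /Se /Sh /Eh => fx fy ex hx ey hy.
apply/inOA_sem; rewrite /Sf /Ee /Ef /Se /Sh /Eh /=.
rewrite !phi_scale !sig_scale !phi_add !sig_add !phi_opp !sig_opp !phi_mul !sig_mul.
rewrite ex ey hx hy fx fy; split; ring.
Qed.

Definition Pk (k : nat) : laurent := (('X - 1) ^+ k, 0%N).
Lemma phi_Pk k : phi (Pk k) = (Xf - 1) ^+ k.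
Proof. by rewrite /phi /= expr0 invr1 mulr1 rmorphXn rmorphB rmorph1. Qed.
Lemma sig_Pk k : sig (Pk k) = (Xf^-1 - 1) ^+ k.
Proof. by rewrite /sig /= expr0 mul1r rmorphXn rmorphB rmorph1 ev_X. Qed.

Definition Xs k := Loop (lscale 2 (Pk k)) (linv (lscale 2 (Pk k))) lzero.
Definition Ys (k : nat) := Loop lzero lzero (lscale ((-1) ^+ k) (ladd (Pk k) (lopp (linv (Pk k))))).

Lemma Ee_Xs k : Ee (Xs k) = io 2 * (Xf - 1) ^+ k.
Proof. by rewrite /Ee /= phi_scale phi_Pk. Qed.
Lemma Ef_Xs k : Ef (Xs k) = io 2 * (Xf^-1 - 1) ^+ k.
Proof. by rewrite /Ef /= phi_linv sig_scale sig_Pk. Qed.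
Lemma Eh_Xs k : Eh (Xs k) = 0.
Proof. exact: phi_zero. Qed.
Lemma Ee_Ys k : Ee (Ys k) = 0.
Proof. exact: phi_zero. Qed.
Lemma Eh_Ys k : Eh (Ys k) = io ((-1) ^+ k) * ((Xf - 1) ^+ k - (Xf^-1 - 1) ^+ k).
Proof. by rewrite /Eh /= phi_scale phi_add phi_opp phi_linv phi_Pk sig_Pk. Qed.

Lemma inOA_Xs k : inOA (Xs k).
Proof.
apply/inOA_sem; rewrite /Ef /Se /Sh /Eh /= phi_linv sig_zero phi_zero oppr0; by split.
Qed.
Lemma inOA_Ys k : inOA (Ys k).
Proof.
apply/inOA_sem; rewrite /Ef /Se /Sh /Eh /= phi_zero sig_zero; split=> //.
rewrite phi_scale sig_scale phi_add sig_add !phi_opp !sig_opp phi_linv sig_linv; ring.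
Qed.
Lemma inOA_A m : inOA (A_ m).
Proof.
apply/inOA_sem; rewrite /Ef /Se /Sh /Eh /= phi_scale sig_scale phi_mon sig_mon sig_zero phi_zero.
by rewrite oppr0.
Qed.
Lemma inOA_G m : inOA (G_ m).
Proof.
apply/inOA_sem; rewrite /Ef /Se /Sh /Eh /= phi_zero sig_zero; split=> //.
by rewrite phi_add sig_add !phi_opp !sig_opp !phi_mon !sig_mon opprK opprB.
Qed.

Lemma Ee_A m : Ee (A_ m) = io 2 * Xf ^ m.
Proof. by rewrite /Ee /= phi_scale phi_mon. Qed.
Lemma Eh_A m : Eh (A_ m) = 0.
Proof. exact: phi_zero. Qed.
Lemma Ee_G m : Ee (G_ m) = 0.
Proof. exact: phi_zero. Qed.
Lemma Eh_G m : Eh (G_ m) = Xf ^ m - Xf ^ (- m).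
Proof. by rewrite /Eh /= phi_add phi_opp !phi_mon. Qed.

Section Main.
Variable L' : nat.
Local Notation L := L'.+1.

Lemma exists_exp : expansion L Xs Ys.
Proof.
split; first by move=> k _; split; [exact: inOA_Xs | exact: inOA_Ys].
move=> m; split.
  apply: congI_sem; [exact: inOA_A | apply: inOA_sum => k _; exact: inOA_Xs | |].
    rewrite Ee_sum.
    have -> : Ee (A_ m) - \sum_(k < L) io (binomZ m k) * Ee (Xs k) = io 2 * Dm L' Xf m.
      rewrite /Dm /Sm mulrBr mulr_sumr Ee_A; congr (_ - _).
      by apply: eq_bigr => k _; rewrite Ee_Xs mulrCA.
    apply: J_mull; first exact: Rl_io.
    apply: D_J; [exact: Xf_neq0 | exact: Rl_Xf | exact: Rl_XfV | exact: J_T].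
  rewrite Eh_sum big1 ?subr0; last by move=> k _; rewrite Eh_Xs mulr0.
  rewrite Eh_A; exact: J0.
apply: congI_sem; [exact: inOA_G | apply: inOA_sum => k _; exact: inOA_Ys | |].
  rewrite Ee_sum big1 ?subr0; last by move=> k _; rewrite Ee_Ys mulr0.
  rewrite Ee_G; exact: J0.
rewrite Eh_sum.
have -> : Eh (G_ m) - \sum_(k < L) io ((-1) ^+ k * binomZ m k) * Eh (Ys k)
    = Dm L' Xf m - Dm L' Xf^-1 m.
  rewrite /Dm /Sm Eh_G exprz_inv.
  have -> : \sum_(k < L) io ((-1) ^+ k * binomZ m k) * Eh (Ys k) =
     \sum_(k < L) io (binomZ m k) * (Xf - 1) ^+ k - \sum_(k < L) io (binomZ m k) * (Xf^-1 - 1) ^+ k.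
    rewrite -sumrB; apply: eq_bigr => k _; rewrite Eh_Ys rmorphM.
    have hsq : io ((-1) ^+ k) * io ((-1) ^+ k) = 1.
      by rewrite -rmorphM -exprMn mulrNN mulr1 expr1n rmorph1.
    transitivity ((io ((-1) ^+ k) * io ((-1) ^+ k)) *
       (io (binomZ m k) * (Xf - 1) ^+ k - io (binomZ m k) * (Xf^-1 - 1) ^+ k)); first by ring.
    by rewrite hsq mul1r.
  ring.
apply: J_sub.
  apply: D_J; [exact: Xf_neq0 | exact: Rl_Xf | exact: Rl_XfV | exact: J_T].
apply: D_J; [exact: XfV_neq0 | exact: Rl_XfV | rewrite invrK; exact: Rl_Xf | exact: J_TV].
Qed.
End Main.

Section Main2.
Variable L' : nat.
Local Notation L := L'.+1.

Lemma uniq_core (e e' : nat -> K) (w : int -> K) (s : nat -> C) (c : int -> nat -> C) :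
  (forall k, s k * s k = 1) -> (forall m k, c m k = s k * binomZ m k) ->
  (forall m, J L (w m - \sum_(k < L) io (c m k) * e k)) ->
  (forall m, J L (w m - \sum_(k < L) io (c m k) * e' k)) ->
  forall k, (k < L)%N -> J L (e k - e' k).
Proof.
move=> hs hc h h' k hk.
have ht : forall j, (j < L)%N -> J L (io (s j) * (e j - e' j)); last first.
  have -> : e k - e' k = io (s k) * (io (s k) * (e k - e' k)).
    by rewrite mulrA -rmorphM hs rmorph1 mul1r.
  by apply: J_mull; [exact: Rl_io | exact: ht].
apply: tri.
move=> m hm; have := J_sub (h' m) (h m).
have -> : w m - \sum_(k < L) io (c m k) * e' k - (w m - \sum_(k < L) io (c m k) * e k)
  = \sum_(k < L) io (c m k) * e k - \sum_(k < L) io (c m k) * e' k by ring.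
rewrite -sumrB; congr (J L _); apply: eq_bigr => i _; rewrite hc rmorphM; ring.
Qed.

Lemma uniq_part X Y X' Y' : expansion L X Y -> expansion L X' Y' ->
  forall k, (k < L)%N -> congI L (X k) (X' k) /\ congI L (Y k) (Y' k).
Proof.
move=> [hOA h] [hOA' h'] k hk.
have hs1 : forall k : nat, (1 : C) * 1 = 1 by move=> _; rewrite mulr1.
have hs2 : forall k : nat, ((-1) ^+ k : C) * (-1) ^+ k = 1.
  by move=> j; rewrite -exprMn mulrNN mulr1 expr1n.
have hc1 : forall (m : int) (k : nat), binomZ m k = 1 * binomZ m k by move=> *; rewrite mul1r.
have hc2 : forall (m : int) (k : nat), (-1) ^+ k * binomZ m k = (-1) ^+ k * binomZ m k by [].
split; apply: congI_sem; try (by case: (hOA k hk)); try (by case: (hOA' k hk)).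
- apply: (@uniq_core (fun j => Ee (X j)) (fun j => Ee (X' j)) (fun m => Ee (A_ m)) _ (fun m k => binomZ m k) hs1 hc1) => // m.
    by case: (congI_J (proj1 (h m))) => + _; rewrite Ee_sum.
  by case: (congI_J (proj1 (h' m))) => + _; rewrite Ee_sum.
- apply: (@uniq_core (fun j => Eh (X j)) (fun j => Eh (X' j)) (fun m => Eh (A_ m)) _ (fun m k => binomZ m k) hs1 hc1) => // m.
    by case: (congI_J (proj1 (h m))) => _ +; rewrite Eh_sum.
  by case: (congI_J (proj1 (h' m))) => _ +; rewrite Eh_sum.
- apply: (@uniq_core (fun j => Ee (Y j)) (fun j => Ee (Y' j)) (fun m => Ee (G_ m)) _ (fun m k => (-1) ^+ k * binomZ m k) hs2 hc2) => // m.
    by case: (congI_J (proj2 (h m))) => + _; rewrite Ee_sum.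
  by case: (congI_J (proj2 (h' m))) => + _; rewrite Ee_sum.
- apply: (@uniq_core (fun j => Eh (Y j)) (fun j => Eh (Y' j)) (fun m => Eh (G_ m)) _ (fun m k => (-1) ^+ k * binomZ m k) hs2 hc2) => // m.
    by case: (congI_J (proj2 (h m))) => _ +; rewrite Eh_sum.
  by case: (congI_J (proj2 (h' m))) => _ +; rewrite Eh_sum.
Qed.
End Main2.

Lemma Ee_scale c x : Ee (loop_scale c x) = io c * Ee x. Proof. exact: phi_scale. Qed.
Lemma Eh_scale c x : Eh (loop_scale c x) = io c * Eh x. Proof. exact: phi_scale. Qed.
Lemma Ee_br x y : Ee (loop_bracket x y) = io 2 * (Eh x * Ee y - Ee x * Eh y).
Proof. by rewrite /Ee /Eh /= phi_scale phi_add phi_opp !phi_mul. Qed.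
Lemma Eh_br x y : Eh (loop_bracket x y) = Ee x * Ef y - Ef x * Ee y.
Proof. by rewrite /Ee /Eh /Ef /= phi_add phi_opp !phi_mul. Qed.

Lemma Ef_diff L x y : inOA x -> inOA y -> J L (Ee x - Ee y) -> J L (Ef x - Ef y).
Proof.
move=> /inOA_sem [hx _] /inOA_sem [hy _] h; rewrite hx hy.
have := @J_sig L (ladd (le x) (lopp (le y))).
by rewrite phi_add phi_opp sig_add sig_opp; apply.
Qed.

Lemma c4 k : ((-1) ^+ k / 4 * 2 * 2 : C) = (-1) ^+ k.
Proof. by rewrite -mulrA -natrM divfK // (natC_neq0 3). Qed.

Theorem lemma6 (L : nat) (hL : (1 <= L)%N) :
  (exists X Y : nat -> loop, expansion L X Y) /\
  (forall X Y X' Y' : nat -> loop, expansion L X Y -> expansion L X' Y' ->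
     forall k, (k < L)%N -> congI L (X k) (X' k) /\ congI L (Y k) (Y' k)) /\
  (forall X Y : nat -> loop, expansion L X Y ->
     forall k, (k < L)%N ->
       congI L (Y k) (loop_scale ((-1) ^+ k / 4) (loop_bracket (X k) (X 0%N)))).
Proof.
case: L hL => // L' _.
split; first by exists Xs, Ys; exact: exists_exp.
split; first exact: uniq_part.
move=> X Y EX k hk.
have [cXk cYk] := uniq_part EX (exists_exp L') hk.
have [cX0 _] := uniq_part EX (exists_exp L') (ltn0Sn L').
have [oXk oYk] := proj1 EX k hk.
have [oX0 _] := proj1 EX 0%N (ltn0Sn L').
have [jEk jHk] := congI_J cXk.
have [jE0 jH0] := congI_J cX0.
have [jEY jHY] := congI_J cYk.
have jFk := Ef_diff oXk (inOA_Xs k) jEk.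
have jF0 := Ef_diff oX0 (inOA_Xs 0) jE0.
rewrite Eh_Xs subr0 in jHk; rewrite Eh_Xs subr0 in jH0; rewrite Ee_Ys subr0 in jEY.
apply: congI_sem => //; first by apply: inOA_scale; exact: inOA_bracket.
  rewrite Ee_scale Ee_br; apply: J_sub => //; apply: J_mull; first exact: Rl_io.
  apply: J_mull; first exact: Rl_io.
  by apply: J_sub; [apply: J_mulr => //; exact: Rl_phi | apply: J_mull => //; exact: Rl_phi].
set c := (-1) ^+ k / 4 : C.
have key : Eh (Ys k) = io c * (Ee (Xs k) * Ef (Xs 0) - Ef (Xs k) * Ee (Xs 0)).
  rewrite Eh_Ys Ee_Xs Ef_Xs !Ee_Xs Ef_Xs !expr0 !mulr1.
  transitivity (io (c * 2 * 2) * ((Xf - 1) ^+ k - (Xf^-1 - 1) ^+ k)); last by rewrite !rmorphM; ring.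
  by rewrite c4.
rewrite Eh_scale Eh_br.
have -> : Eh (Y k) - io c * (Ee (X k) * Ef (X 0%N) - Ef (X k) * Ee (X 0%N)) =
  (Eh (Y k) - Eh (Ys k)) - io c * ((Ee (X k) - Ee (Xs k)) * Ef (X 0%N)
     + Ee (Xs k) * (Ef (X 0%N) - Ef (Xs 0)) - ((Ef (X k) - Ef (Xs k)) * Ee (X 0%N)
     + Ef (Xs k) * (Ee (X 0%N) - Ee (Xs 0)))).
  by rewrite key; ring.
apply: J_sub => //; apply: J_mull; first exact: Rl_io.
apply: J_sub; apply: J_add.
- by apply: J_mulr => //; exact: Rl_phi.
- by apply: J_mull => //; exact: Rl_phi.
- by apply: J_mulr => //; exact: Rl_phi.
- by apply: J_mull => //; exact: Rl_phi.
Qed.
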